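(* Let $u,v$ be positive integers, let $\mu=(u^v)$ be the $u\times v$ rectangular partition of $n=uv$, and let $s^\mu$ be the number of standard Young tableaux of shape $\mu$. Then $$\left(\frac{n}{u+v}\right)^n\left(\frac{2}{e}\right)^n<s^\mu,$$ where $e=2.71828\ldots$. In particular, if $\alpha\le\frac{n}{u+v}\cdot\frac2e$ then $\alpha^n\le s^\mu$.
   Context: $s^\mu$ equals the dimension of the irreducible representation of $S_n$ over a field of characteristic $0$ indexed by $\mu$, and is given by the hook formula $s^\mu=n!/\prod_{x\in\mu}h_x$, where $h_x$ is the hook number of the box $x$. *)

(* Defs.v *)
From mathcomp Require Import all_boot.
From Stdlib Require Import Reals.

Set Implicit Arguments.
Unset Strict Implicit.
Unset Printing Implicit Defensive.

(* A filling of the rectangular Young diagram with v rows and u columns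
   (the partition (u^v) of n = u*v): cell (i, j) = row i, column j.
   Entries are taken in {0, ..., n-1} (instead of {1, ..., n}). *)
Definition rect_filling (u v : nat) := {ffun 'I_v * 'I_u -> 'I_(u * v)}.

(* Standard Young tableau: entries all distinct (hence a bijection onto
   {0..n-1}, by cardinality), strictly increasing along each row (left to
   right) and along each column (top to bottom). *)
Definition is_SYT_rect (u v : nat) (f : rect_filling u v) : bool :=
  [&& injectiveb f,
      [forall i : 'I_v, forall j : 'I_u, forall j' : 'I_u,
          (j < j')%N ==> (f (i, j) < f (i, j'))%N] &
      [forall j : 'I_u, forall i : 'I_v, forall i' : 'I_v,
          (i < i')%N ==> (f (i, j) < f (i', j))%N]].

Definition num_SYT_rect (u v : nat) : nat :=
  #|[pred f : rect_filling u v | is_SYT_rect f]|.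

(* Main.v *)
Require Import Defs.
From mathcomp Require Import all_boot.
From Stdlib Require Import Reals.
From Stdlib Require Import Lra Lia.
From mathcomp Require Import zify.
Set Implicit Arguments. Unset Strict Implicit. Unset Printing Implicit Defensive.

Lemma pow_lt_strict (x y : R) n : (0 <= x)%R -> (x < y)%R -> (x ^ n.+1 < y ^ n.+1)%R.
Proof.
move=> hx hxy; elim: n => [|n IH]; first by simpl; lra.
have h1 : (0 <= x ^ n.+1)%R by apply: pow_le.
change (x * x ^ n.+1 < y * y ^ n.+1)%R. nra.
Qed.

Lemma exp_pow_INR (y : R) n : (exp y ^ n = exp (INR n * y))%R.
Proof.
elim: n => [|n IH]; first by rewrite /= Rmult_0_l exp_0.
change (exp y * exp y ^ n = exp (INR n.+1 * y))%R.
by rewrite IH -exp_plus S_INR; congr exp; ring.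
Qed.

Lemma INR_expn m n : INR (expn m n) = (INR m ^ n)%R.
Proof.
elim: n => [|n IH]; first by rewrite expn0.
by rewrite expnS mulnE mult_INR IH.
Qed.

Lemma INR_fact_S k : INR (k.+1)`! = (INR k.+1 * INR k`!)%R.
Proof. by rewrite factS mulnE mult_INR. Qed.

Lemma nn_fact k : (INR k.+1 ^ k.+1 < INR (k.+1)`! * exp 1 ^ k.+1)%R.
Proof.
have He : (1 < exp 1)%R by have := exp_ineq1 1 R1_neq_R0; lra.
elim: k => [|k IH].
  rewrite (INR_fact_S 0) /=; lra.
set a := INR k.+1.
have ha : (0 < a)%R by apply: lt_0_INR; lia.
have hb : INR k.+2 = (a + 1)%R by rewrite S_INR.
have key : ((1 + / a) ^ k.+1 < exp 1)%R.
  have h1 : (1 + / a < exp (/ a))%R.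
    apply: exp_ineq1; apply: Rgt_not_eq; apply: Rinv_0_lt_compat ha.
  have h0 : (0 <= 1 + / a)%R by have := Rinv_0_lt_compat _ ha; lra.
  have h2 := @pow_lt_strict _ _ k h0 h1.
  by rewrite exp_pow_INR -/a Rinv_r in h2; last lra.
have e1 : (INR k.+2 ^ k.+1 = a ^ k.+1 * (1 + / a) ^ k.+1)%R.
  have h : (a * (1 + / a) = a + 1)%R by field; lra.
  by rewrite -Rpow_mult_distr h hb.
have hpa : (0 < a ^ k.+1)%R by apply: pow_lt.
rewrite (INR_fact_S k.+1) -/a.
change (INR k.+2 * INR k.+2 ^ k.+1 < INR k.+2 * INR (k.+1)`! * (exp 1 * exp 1 ^ k.+1))%R.
rewrite e1.
have hb0 : (0 < INR k.+2)%R by apply: lt_0_INR; lia.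
have s1 : (a ^ k.+1 * (1 + / a) ^ k.+1 < a ^ k.+1 * exp 1)%R by apply: Rmult_lt_compat_l.
have s2 : (a ^ k.+1 * exp 1 < INR (k.+1)`! * exp 1 ^ k.+1 * exp 1)%R.
  apply: Rmult_lt_compat_r; [lra | exact: IH].
have s3 : (a ^ k.+1 * (1 + / a) ^ k.+1 < INR (k.+1)`! * exp 1 ^ k.+1 * exp 1)%R by lra.
have := Rmult_lt_compat_l _ _ _ hb0 s3.
move: (a ^ k.+1 * (1 + / a) ^ k.+1)%R (INR (k.+1)`!) (exp 1 ^ k.+1)%R => p q r.
move=> h; rewrite -Rmult_assoc; lra.
Qed.

Lemma final_real (u v s H : nat) (hu : (0 < u)%N) (hv : (0 < v)%N) :
  ((u * v)`! <= s * H)%N -> (expn 4 (u * v) * (H * H) <= expn (u + v) (2 * (u * v)))%N ->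
  let n := (u * v)%N in
  (((INR n / INR (u + v)) * (2 / exp 1)) ^ n < INR s)%R /\
  (forall alpha : R, (0 <= alpha)%R ->
     (alpha <= (INR n / INR (u + v)) * (2 / exp 1))%R ->
     (alpha ^ n <= INR s)%R).
Proof.
move=> h1 h2 n.
have hn : (0 < n)%N by rewrite /n muln_gt0 hu.
have h3 : (expn 2 n * H <= expn (u + v) n)%N.
  rewrite -leq_sqr.
  have -> : expn (expn 2 n * H) 2 = expn 4 n * (H * H).
    by rewrite expnMn -expnM (mulnC n 2) expnM mulnC.
  have -> : expn (expn (u + v) n) 2 = expn (u + v) (2 * n).
    by rewrite -expnM mulnC.
  exact: h2.
set t := ((INR n / INR (u + v)) * (2 / exp 1))%R.
have He : (1 < exp 1)%R by have := exp_ineq1 1 R1_neq_R0; lra.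
have hA : (0 < INR (u + v))%R by apply: lt_0_INR; apply/ltP; rewrite addn_gt0 hu.
have hN : (0 <= INR n)%R by apply: pos_INR.
have ht0 : (0 <= t)%R.
  rewrite /t; apply: Rmult_le_pos; apply: Rmult_le_pos; try lra.
    by apply: Rlt_le; apply: Rinv_0_lt_compat.
  by apply: Rlt_le; apply: Rinv_0_lt_compat; lra.
have main : (t ^ n < INR s)%R.
  have hAn : (0 < INR (u + v) ^ n)%R by apply: pow_lt.
  have hEn : (0 < exp 1 ^ n)%R by apply: pow_lt; lra.
  have et : (t ^ n * (INR (u + v) ^ n * exp 1 ^ n) = INR n ^ n * 2 ^ n)%R.
    have hA' : (INR (u + v) <> 0)%R by lra.
    have hE' : (exp 1 <> 0)%R by lra.
    have e : (t * (INR (u + v) * exp 1) = INR n * 2)%R by rewrite /t; field.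
    by rewrite -!Rpow_mult_distr e.
  have k1 : (INR n ^ n < INR n`! * exp 1 ^ n)%R.
    by case: (n) hn => [//|k] _; apply: nn_fact.
  have k2 : (INR n`! <= INR s * INR H)%R by rewrite -mult_INR -mulnE; apply: le_INR; apply/leP.
  have k3 : (2 ^ n * INR H <= INR (u + v) ^ n)%R.
    rewrite -(INR_expn (u + v)).
    have -> : (2 ^ n = INR (expn 2 n))%R by rewrite INR_expn.
    by rewrite -mult_INR -mulnE; apply: le_INR; apply/leP.
  have hS : (0 <= INR s)%R by apply: pos_INR.
  have h2n : (0 < 2 ^ n)%R by apply: pow_lt; lra.
  have k4 : (INR n ^ n * 2 ^ n < INR s * INR (u + v) ^ n * exp 1 ^ n)%R.
    have := Rmult_lt_compat_r _ _ _ h2n k1.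
    have := Rmult_le_compat_r _ _ _ (Rlt_le _ _ hEn) (Rmult_le_compat_r _ _ _ (Rlt_le _ _ h2n) k2).
    have := Rmult_le_compat_l _ _ _ hS k3.
    nra.
  apply: (Rmult_lt_reg_r (INR (u + v) ^ n * exp 1 ^ n)); first by apply: Rmult_lt_0_compat.
  rewrite et; lra.
split => // alpha ha hat.
apply: Rle_trans (Rlt_le _ _ main).
by apply: pow_incr.
Qed.


Definition valid (lam : seq nat) a := (nth 0 lam a.+1 < nth 0 lam a)%N.
Definition decr (lam : seq nat) a := set_nth 0 lam a (nth 0 lam a).-1.
Definition part (lam : seq nat) := forall i, (nth 0 lam i.+1 <= nth 0 lam i)%N.

Fixpoint gen (v m : nat) (lam : seq nat) : seq (seq nat) :=
  if m is m'.+1 then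
    [seq a :: r | a <- [seq a <- iota 0 v | valid lam a], r <- gen v m' (decr lam a)]
  else [:: [::]].

Fixpoint fill (r : seq nat) : nat -> nat -> nat :=
  match r with
  | [::] => fun _ _ => 0
  | a :: r' => fun i j => if (i == a) && (j == count_mem a r') then size r' else fill r' i j
  end.

Lemma nth_decr lam a i : nth 0 (decr lam a) i = if i == a then (nth 0 lam a).-1 else nth 0 lam i.
Proof. by rewrite /decr nth_set_nth /=. Qed.

Lemma size_decr lam a : (a < size lam)%N -> size (decr lam a) = size lam.
Proof. by move=> h; rewrite /decr size_set_nth; apply/maxn_idPr. Qed.

Lemma sumn_set_nth s a y : (a < size s)%N -> sumn (set_nth 0 s a y) + nth 0 s a = sumn s + y.
Proof.
elim: s a => [//|x s IH] [|a] /= h; first by lia.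
by have := IH a h; lia.
Qed.

Lemma nth_le_sumn s i : (nth 0 s i <= sumn s)%N.
Proof. by elim: s i => [|x s IH] [|i] //=; [apply: leq_addr | apply: leq_trans (IH i) (leq_addl _ _)]. Qed.

Lemma part_mono lam i j : part lam -> (i <= j)%N -> (nth 0 lam j <= nth 0 lam i)%N.
Proof.
move=> hp /subnK <-; elim: (j - i) => [//|k IH].
by rewrite addSn; apply: leq_trans (hp _) IH.
Qed.

Lemma part_decr lam a : part lam -> valid lam a -> part (decr lam a).
Proof.
move=> hp hv i; rewrite !nth_decr.
case: (eqVneq i.+1 a) => [<-|h1].
  rewrite (ltn_eqF (ltnSn i)).
  by apply: leq_trans (leq_pred _) (hp i).
case: (eqVneq i a) => [->|h2] //.
by rewrite -ltnS prednK // (leq_trans _ hv).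
Qed.

Definition good (lam r : seq nat) :=
  forall i j, (j < nth 0 lam i)%N ->
  [/\ (fill r i j < size r)%N,
      (forall j', (j < j')%N -> (j' < nth 0 lam i)%N -> (fill r i j < fill r i j')%N),
      ((j < nth 0 lam i.+1)%N -> (fill r i j < fill r i.+1 j)%N) &
      (forall i' j', (j' < nth 0 lam i')%N -> fill r i j = fill r i' j' -> i = i' /\ j = j')].

Lemma sumn0_nth s i : sumn s = 0 -> nth 0 s i = 0.
Proof. by move=> h; have := nth_le_sumn s i; rewrite h leqn0 => /eqP. Qed.

Lemma gen_inv v m lam r : size lam = v -> part lam -> sumn lam = m -> r \in gen v m lam ->
  [/\ forall i, count_mem i r = nth 0 lam i, size r = m & good lam r].
Proof.
elim: m lam r => [|m IH] lam r hs hp hsum /=.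
  rewrite inE => /eqP ->; split => //.
    by move=> i; rewrite sumn0_nth.
  by move=> i j; rewrite sumn0_nth.
case/allpairsPdep => a [r' [ha hr' ->]].
move: ha; rewrite mem_filter mem_iota /= add0n => /andP[hv hav].
set lam' := decr lam a.
have hs' : size lam' = v by rewrite size_decr // hs.
have hla : (0 < nth 0 lam a)%N by apply: leq_ltn_trans hv.
have hp' : part lam' := part_decr hp hv.
have hsum' : sumn lam' = m.
  have := sumn_set_nth (nth 0 lam a).-1 (_ : a < size lam)%N; rewrite hs => /(_ hav).
  rewrite -/(decr lam a) -/lam' hsum; move: hla; lia.
have [hc hsz hg] := IH lam' r' hs' hp' hsum' hr'.
set c := (nth 0 lam a).-1.
have hca : count_mem a r' = c by rewrite hc nth_decr eqxx.
have Hf : forall i j, fill (a :: r') i j = if (i == a) && (j == c) then m else fill r' i j.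
  by move=> i j /=; rewrite hca hsz.
have Hn : forall i, nth 0 lam' i = if i == a then c else nth 0 lam i by move=> i; rewrite nth_decr.
have Hdom : forall i j, (j < nth 0 lam i)%N -> ((i == a) && (j == c)) || (j < nth 0 lam' i)%N.
  move=> i j hj; rewrite Hn; case: (eqVneq i a) => [eia|hia] /=; last by [].
  by rewrite -leq_eqVlt; move: hj; rewrite eia /c; lia.
have Hdom' : forall i j, (j < nth 0 lam' i)%N -> ~~ ((i == a) && (j == c)) /\ (j < nth 0 lam i)%N.
  move=> i j; rewrite Hn; case: (eqVneq i a) => [eia|hia] /= hj; last by [].
  by rewrite (ltn_eqF hj) eia; move: hj; rewrite /c; lia.
split.
- move=> i /=; rewrite hc Hn; case: (eqVneq i a) => [eia|h]; first by rewrite eia /c; move: hla; lia.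
  by [].
- by rewrite /= hsz.
move=> i j hj; rewrite /= hsz hca.
have hnew : forall i j, (j < nth 0 lam' i)%N -> (fill r' i j < m)%N.
  by move=> i0 j0 h0; have [+ _ _ _] := hg i0 j0 h0; rewrite hsz.
have Hold : forall i j, (j < nth 0 lam i)%N -> ~~ ((i == a) && (j == c)) -> (j < nth 0 lam' i)%N.
  by move=> i0 j0 h0 hn; have := Hdom i0 j0 h0; rewrite (negbTE hn).
case/orP: (Hdom i j hj) => [/andP[/eqP ei /eqP ej]|hj'].
- subst i j; rewrite !eqxx /=; split => //.
  + move=> j' hj' hj'2; exfalso; move: hj' hj'2; rewrite /c; lia.
  + move=> h; exfalso; move: h hv; rewrite /valid /c; lia.
  + move=> i' j' hj'2; case: (boolP ((i' == a) && (j' == c))) => [/andP[/eqP -> /eqP ->]|hn] // h.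
    by move: (hnew i' j' (Hold i' j' hj'2 hn)); rewrite -h ltnn.
- have [hn _] := Hdom' i j hj'; rewrite (negbTE hn).
  have [g1 g2 g3 g4] := hg i j hj'.
  split.
  + by apply: leq_trans (hnew i j hj') _.
  + move=> j' hjj' hj'2; case: (boolP ((i == a) && (j' == c))) => [_|hn'].
      exact: hnew.
    exact: g2 (Hold i j' hj'2 hn').
  + move=> h; case: (boolP ((i.+1 == a) && (j == c))) => [_|hn'].
      exact: hnew.
    exact: g3 (Hold i.+1 j h hn').
  + move=> i' j' hj'2; case: (boolP ((i' == a) && (j' == c))) => [_|hn'] h.
      by move: (hnew i j hj'); rewrite h ltnn.
    exact: g4 (Hold i' j' hj'2 hn') h.
Qed.

Lemma gen_step v m lam r : size lam = v -> part lam -> sumn lam = m.+1 -> r \in gen v m.+1 lam ->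
  exists a r', [/\ r = a :: r', (a < v)%N, valid lam a & r' \in gen v m (decr lam a)] /\
    [/\ size (decr lam a) = v, part (decr lam a) & sumn (decr lam a) = m].
Proof.
move=> hs hp hsum /allpairsPdep [a [r' [ha hr' ->]]].
move: ha; rewrite mem_filter mem_iota /= add0n => /andP[hv hav].
have hla : (0 < nth 0 lam a)%N by apply: leq_ltn_trans hv.
exists a, r'; split => //; split; first by rewrite size_decr // hs.
  exact: part_decr.
have := sumn_set_nth (nth 0 lam a).-1 (_ : a < size lam)%N; rewrite hs => /(_ hav).
rewrite -/(decr lam a) hsum; move: hla; lia.
Qed.

Lemma gen_inj v m lam r1 r2 : size lam = v -> part lam -> sumn lam = m ->
  r1 \in gen v m lam -> r2 \in gen v m lam ->
  (forall i j, (j < nth 0 lam i)%N -> fill r1 i j = fill r2 i j) -> r1 = r2.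
Proof.
elim: m lam r1 r2 => [|m IH] lam r1 r2 hs hp hsum.
  by rewrite /= !inE => /eqP -> /eqP ->.
move=> h1 h2 hf.
have [c1 _ _] := gen_inv hs hp hsum h1.
have [c2 _ g2] := gen_inv hs hp hsum h2.
have [a1 [r1' [[e1 _ _ hr1] [hs1 hp1 hsum1]]]] := gen_step hs hp hsum h1.
have [a2 [r2' [[e2 _ _ hr2] [hs2 hp2 hsum2]]]] := gen_step hs hp hsum h2.
have [c1' hz1 _] := gen_inv hs1 hp1 hsum1 hr1.
have [c2' hz2 _] := gen_inv hs2 hp2 hsum2 hr2.
have k1 : count_mem a1 r1' = (nth 0 lam a1).-1 by rewrite c1' nth_decr eqxx.
have k2 : count_mem a2 r2' = (nth 0 lam a2).-1 by rewrite c2' nth_decr eqxx.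
have d1 : (count_mem a1 r1' < nth 0 lam a1)%N by rewrite -c1 e1 /= eqxx.
have d2 : (count_mem a2 r2' < nth 0 lam a2)%N by rewrite -c2 e2 /= eqxx.
have f1 : fill r1 a1 (count_mem a1 r1') = m by rewrite e1 /= !eqxx hz1.
have f2 : fill r2 a2 (count_mem a2 r2') = m by rewrite e2 /= !eqxx hz2.
have [_ _ _ g4] := g2 a1 _ d1.
have e : fill r2 a1 (count_mem a1 r1') = fill r2 a2 (count_mem a2 r2') by rewrite -hf // f1 f2.
have [ea ec] := g4 a2 _ d2 e.
subst a2.
rewrite e1 e2; congr (_ :: _).
apply: (IH (decr lam a1)) => // i j hj.
have hn : ~~ ((i == a1) && (j == (nth 0 lam a1).-1)).
  apply/negP => /andP[/eqP ei /eqP ej]; move: hj; rewrite nth_decr ei ej eqxx ltnn //.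
have hj' : (j < nth 0 lam i)%N.
  by move: hj; rewrite nth_decr; case: eqP => // ->; move=> h; apply: leq_trans h (leq_pred _).
by have := hf i j hj'; rewrite e1 e2 /= k1 k2 (negbTE hn).
Qed.

Lemma gen_uniq v m lam : uniq (gen v m lam).
Proof.
elim: m lam => [//|m IH] lam /=.
apply: allpairs_uniq_dep; first by rewrite filter_uniq // iota_uniq.
  by move=> a _; apply: IH.
by move=> [a1 s1] [a2 s2] _ _ /= [-> ->].
Qed.

Lemma size_gen v m lam : size (gen v m.+1 lam) =
  \sum_(0 <= a < v | valid lam a) size (gen v m (decr lam a)).
Proof.
by rewrite /= size_allpairs_dep sumnE big_map big_filter /index_iota subn0.
Qed.

From mathcomp Require Import all_order all_algebra.
From mathcomp Require Import ring zify.
Import Order.TTheory GRing.Theory Num.Theory.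
Local Open Scope ring_scope.
Delimit Scope nat_scope with N.

Definition Rf (F : fieldType) (x : nat -> F) (k i : nat) : F :=
  \prod_(0 <= j < k) (if j == i then 1 else (x i - x j - 1) / (x i - x j)).

Definition distinct (F : fieldType) (x : nat -> F) (k : nat) :=
  forall i j : nat, (i < k)%N -> (j < k)%N -> i != j -> x i - x j != 0.

Lemma distinctS (F : fieldType) (x : nat -> F) k : distinct x k.+1 -> distinct x k.
Proof. by move=> H i j hi hj; apply: H; apply: ltnW. Qed.

Lemma RfS (F : fieldType) (x : nat -> F) k i :
  Rf x k.+1 i = Rf x k i * (if k == i then 1 else (x i - x k - 1) / (x i - x k)).
Proof. by rewrite /Rf big_nat_recr. Qed.

Lemma identI (F : fieldType) (x : nat -> F) k t :
  distinct x k -> (forall j, (j < k)%N -> t - x j != 0) ->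
  \prod_(0 <= j < k) ((t - x j - 1) / (t - x j)) =
  1 - \sum_(0 <= i < k) Rf x k i / (t - x i).
Proof.
elim: k t => [|k IH] t Hd Ht; first by rewrite !big_geq // subr0.
have Hd' := distinctS Hd.
rewrite big_nat_recr //= IH //; last by move=> j hj; apply: Ht; apply: ltnW.
rewrite big_nat_recr //=.
have Hk : Rf x k.+1 k = 1 - \sum_(0 <= i < k) Rf x k i / (x k - x i).
  rewrite RfS eqxx mulr1 -IH //; last by move=> j hj; apply: (Hd k j (ltnSn k) (ltnW hj)); rewrite eq_sym ltn_eqF.
  by apply: eq_big_nat => j /andP[_ hj]; rewrite ltn_eqF.
rewrite Hk.
have tk : t - x k != 0 by apply: Ht.
set c := (t - x k - 1) / (t - x k).
have HB : \sum_(0 <= i < k) Rf x k.+1 i / (t - x i) =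
   c * \sum_(0 <= i < k) Rf x k i / (t - x i) + (\sum_(0 <= i < k) Rf x k i / (x k - x i)) / (t - x k).
  rewrite mulr_sumr mulr_suml -big_split /=.
  rewrite big_nat_cond [RHS]big_nat_cond; apply: eq_bigr => i /andP[/andP[_ hi] _].
  rewrite RfS (gtn_eqF hi).
  have ti : t - x i != 0 by apply: Ht; apply: ltnW.
  have ki : x i - x k != 0 by apply: (Hd i k (ltnW hi) (ltnSn k) (negbT (ltn_eqF hi))).
  have ik : x k - x i != 0 by rewrite -opprB oppr_eq0.
  rewrite /c; move: (Rf x k i) => r; field.
  by rewrite tk ik ti ki.
rewrite HB /c.
move: (\sum_(0 <= i < k) Rf x k i / (t - x i)) => A.
move: (\sum_(0 <= i < k) Rf x k i / (x k - x i)) => C.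
by field.
Qed.

Lemma RfS_last (F : fieldType) (x : nat -> F) k :
  distinct x k.+1 -> Rf x k.+1 k = 1 + \sum_(0 <= i < k) Rf x k i / (x i - x k).
Proof.
move=> Hd.
rewrite RfS eqxx mulr1.
have -> : Rf x k k = \prod_(0 <= j < k) ((x k - x j - 1) / (x k - x j)).
  by apply: eq_big_nat => j /andP[_ hj]; rewrite ltn_eqF.
rewrite identI; last 2 first.
- exact: distinctS Hd.
- by move=> j hj; apply: (Hd k j (ltnSn k) (ltnW hj)); rewrite eq_sym ltn_eqF.
rewrite -sumrN; congr (_ + _); apply: eq_big_nat => i /andP[_ hi].
by rewrite -mulrN -invrN opprB.
Qed.

Lemma identS (F : fieldType) (x : nat -> F) k :
  distinct x k ->
  \sum_(0 <= i < k) Rf x k i = k%:R /\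
  \sum_(0 <= i < k) x i * Rf x k i = \sum_(0 <= i < k) x i - 'C(k, 2)%:R.
Proof.
elim: k => [|k IH] Hd; first by rewrite !big_geq // subr0.
have [IH0 IH1] := IH (distinctS Hd).
have Hl := RfS_last Hd.
have Hki : forall i, (i < k)%N -> x i - x k != 0.
  by move=> i hi; apply: (Hd i k (ltnW hi) (ltnSn k) (negbT (ltn_eqF hi))).
split.
  rewrite big_nat_recr //= Hl.
  have -> : \sum_(0 <= i < k) Rf x k.+1 i = \sum_(0 <= i < k) Rf x k i - \sum_(0 <= i < k) Rf x k i / (x i - x k).
    rewrite -sumrB; apply: eq_big_nat => i /andP[_ hi].
    rewrite RfS (gtn_eqF hi); have := Hki i hi; move: (Rf x k i) => r h; by field.
  rewrite IH0 -natr1; ring.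
rewrite big_nat_recr //= Hl.
have -> : \sum_(0 <= i < k) x i * Rf x k.+1 i = \sum_(0 <= i < k) x i * Rf x k i - \sum_(0 <= i < k) Rf x k i - x k * \sum_(0 <= i < k) Rf x k i / (x i - x k).
  rewrite mulr_sumr -!sumrB; apply: eq_big_nat => i /andP[_ hi].
  rewrite RfS (gtn_eqF hi); have := Hki i hi; move: (Rf x k i) => r h; by field.
rewrite IH0 IH1 [in RHS]big_nat_recr //= binS bin1 natrD.
move: (\sum_(0 <= i < k) Rf x k i / (x i - x k)) => A.
move: (\sum_(0 <= i < k) x i) => B.
ring.
Qed.

Definition Df (F : fieldType) (x : nat -> F) (v : nat) : F :=
  \prod_(0 <= j < v) \prod_(0 <= i < j) (x i - x j).

Lemma prod_if1 (F : fieldType) (z : F) a v : (a < v)%N ->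
  \prod_(0 <= i < v) (if i == a then z else 1) = z.
Proof.
move=> hav.
rewrite (bigD1_seq a) ?mem_iota ?iota_uniq //=; last by rewrite add0n subn0.
rewrite eqxx big1 ?mulr1 //.
by move=> i /negbTE ->.
Qed.

Lemma Dstep (F : fieldType) (x y : nat -> F) v a : (a < v)%N ->
  (forall i, (i < v)%N -> i != a -> y i = x i) -> y a = x a - 1 ->
  distinct x v -> Df y v = Rf x v a * Df x v.
Proof.
elim: v a => [//|v IH] a hav Hy Ha Hd.
rewrite /Df big_nat_recr //= [X in _ = _ * X]big_nat_recr //= RfS.
have Hd' := distinctS Hd.
case: (ltngtP a v) => [hlt|hgt|hav'].
- rewrite -/(Df y v) -/(Df x v) (IH a) //; last by move=> i hi; apply: Hy; apply: ltnW.
  rewrite (Hy v (ltnSn v)) ?gtn_eqF //.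
  have -> : \prod_(0 <= i < v) (y i - x v) =
     \prod_(0 <= i < v) ((x i - x v) * (if i == a then (x a - x v - 1) / (x a - x v) else 1)).
    apply: eq_big_nat => i /andP[_ hi].
    case: eqP => [->|/eqP hia]; last by rewrite mulr1 Hy // ltnW.
    rewrite Ha.
    have h : x a - x v != 0 by apply: (Hd a v (ltnW hlt) (ltnSn v) (negbT (ltn_eqF hlt))).
    by field.
  rewrite big_split /= prod_if1 //; ring.
- by move: hav; rewrite ltnS leqNgt hgt.
- subst a; rewrite -/(Df y v) -/(Df x v).
  have -> : Df y v = Df x v.
    apply: eq_big_nat => j /andP[_ hj]; apply: eq_big_nat => i /andP[_ hi].
    have hiv : (i < v)%N := ltn_trans hi hj.
    by rewrite (Hy i (ltnW hiv) (negbT (ltn_eqF hiv))) (Hy j (ltnW hj) (negbT (ltn_eqF hj))).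
  rewrite mulr1 Ha.
  have -> : \prod_(0 <= i < v) (y i - (x v - 1)) =
     \prod_(0 <= i < v) ((x i - x v) * (if i == v then 1 else (x v - x i - 1) / (x v - x i))).
    apply: eq_big_nat => i /andP[_ hi].
    rewrite (ltn_eqF hi) (Hy i (ltnW hi) (negbT (ltn_eqF hi))).
    have h : x v - x i != 0 by apply: (Hd v i (ltnSn v) (ltnW hi) (negbT (gtn_eqF hi))).
    have h' : x i - x v != 0 by apply: (Hd i v (ltnW hi) (ltnSn v) (negbT (ltn_eqF hi))).
    by field.
  rewrite big_split /= -/(Df x v) /Rf; ring.
Qed.


Definition ell (v : nat) (lam : seq nat) (i : nat) : nat := (nth 0 lam i + (v - 1 - i))%N.
Definition xr (v : nat) (lam : seq nat) (i : nat) : rat := (ell v lam i)%:R.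
Definition Pf (v : nat) (lam : seq nat) : rat := \prod_(0 <= i < v) ((ell v lam i)`!)%:R.
Definition Hk (u v : nat) : nat := \prod_(0 <= i < v) \prod_(0 <= k < u) (i + 1 + k)%N.

Lemma fact_shift u i : ((u + i)`! = i`! * \prod_(0 <= k < u) (i + 1 + k))%N.
Proof.
elim: u => [|u IH]; first by rewrite big_geq // muln1.
by rewrite big_nat_recr //= addSn factS IH; lia.
Qed.

Lemma prod_diff j : (\prod_(0 <= i < j) (j - i) = j`!)%N.
Proof.
elim: j => [|j IH]; first by rewrite big_geq.
rewrite big_nat_recl //= factS subn0; congr (_ * _)%N.
by rewrite -IH; apply: eq_big_nat => i _; rewrite subSS.
Qed.

Lemma Pf_pos v lam : Pf v lam != 0.
Proof.
rewrite /Pf prodf_seq_neq0; apply/allP => i _ /=; by rewrite pnatr_eq0 -lt0n fact_gt0.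
Qed.

Lemma ell_mono v lam i j : part lam -> (i < j)%N -> (j < v)%N -> (ell v lam j < ell v lam i)%N.
Proof.
move=> hp hij hjv; have := part_mono hp (ltnW hij); rewrite /ell; lia.
Qed.

Lemma xr_distinct v lam : part lam -> distinct (xr v lam) v.
Proof.
move=> hp i j hi hj hij; rewrite /xr subr_eq0 eqr_nat.
case: (ltngtP i j) hij => // h _.
  by rewrite gtn_eqF // ell_mono.
by rewrite ltn_eqF // ell_mono.
Qed.

Lemma rect_val u v lam : (forall i, (i < v)%N -> nth 0 lam i = u) ->
  Df (xr v lam) v * (Hk u v)%:R = Pf v lam.
Proof.
move=> hl.
have -> : Df (xr v lam) v = (\prod_(0 <= j < v) j`!)%:R.
  rewrite natr_prod; apply: eq_big_nat => j /andP[_ hj].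
  rewrite -prod_diff natr_prod; apply: eq_big_nat => i /andP[_ hi].
  rewrite /xr /ell !hl ?(ltn_trans hi) // -natrB; last by lia.
  congr (_%:R); lia.
rewrite /Pf /Hk -!natr_prod -natrM -big_split /=.
rewrite [in RHS]big_nat_rev /=; congr (_%:R); apply: eq_big_nat => i /andP[_ hi].
rewrite /ell hl; last by lia.
have -> : (v - 1 - (0 + v - i.+1) = i)%N by lia.
by rewrite fact_shift.
Qed.

Lemma sum_ell v lam : size lam = v ->
  \sum_(0 <= i < v) xr v lam i = (sumn lam + 'C(v, 2))%:R.
Proof.
move=> hs.
rewrite /xr -natr_sum; congr (_%:R).
rewrite /ell big_split /= -bin2_sum; congr (_ + _)%N.
  by rewrite sumnE [RHS](big_nth 0) hs.
rewrite big_nat_rev /=; apply: eq_big_nat => i /andP[_ hi]; lia.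
Qed.

Lemma xr_decr v lam a i : valid lam a -> (i < v)%N ->
  xr v (decr lam a) i = if i == a then xr v lam i - 1 else xr v lam i.
Proof.
move=> hv hi; rewrite /xr /ell nth_decr.
case: eqP => [->|_] //.
have h : (0 < nth 0 lam a)%N by apply: leq_ltn_trans hv.
have -> : (nth 0 lam a + (v - 1 - a) = ((nth 0 lam a).-1 + (v - 1 - a)).+1)%N by lia.
by rewrite -natr1 addrK.
Qed.

Lemma decr_facts v m lam a : size lam = v -> part lam -> sumn lam = m.+1 -> valid lam a -> (a < v)%N ->
  [/\ size (decr lam a) = v, part (decr lam a) & sumn (decr lam a) = m].
Proof.
move=> hs hp hsum hv hav.
have hla : (0 < nth 0 lam a)%N by apply: leq_ltn_trans hv.
split; first by rewrite size_decr // hs.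
  exact: part_decr.
have := sumn_set_nth (nth 0%N lam a).-1 (_ : a < size lam)%N; rewrite hs => /(_ hav).
rewrite -/(decr lam a) hsum; move: hla; lia.
Qed.

Lemma Pf_decr v lam a : valid lam a -> (a < v)%N ->
  Pf v lam = xr v lam a * Pf v (decr lam a).
Proof.
move=> hv hav.
have h : (0 < nth 0 lam a)%N by apply: leq_ltn_trans hv.
rewrite /Pf -(prod_if1 (xr v lam a) hav) -big_split /=.
apply: eq_big_nat => i /andP[_ hi].
rewrite /ell nth_decr; case: eqP => [->|_]; last by rewrite mul1r.
have -> : (nth 0 lam a + (v - 1 - a) = ((nth 0 lam a).-1 + (v - 1 - a)).+1)%N by lia.
by rewrite factS natrM /xr /ell; congr (_%:R * _); lia.
Qed.

Lemma main_bound v m lam : size lam = v -> part lam -> sumn lam = m ->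
  m`!%:R * Df (xr v lam) v / Pf v lam <= (size (gen v m lam))%:R.
Proof.
elim: m lam => [|m IH] lam hs hp hsum.
  have hz : forall i, (i < v)%N -> nth 0%N lam i = 0%N by move=> i _; apply: sumn0_nth.
  have := rect_val hz; rewrite /Hk.
  have -> : (\prod_(0 <= i < v) \prod_(0 <= k < 0) (i + 1 + k))%N = 1%N.
    by rewrite big1 // => i _; rewrite big_geq.
  rewrite mulr1 => ->; rewrite mul1r mulfV ?Pf_pos //.
set x := xr v lam.
have hd : distinct x v := @xr_distinct v lam hp.
have [_ hS1] := identS hd.
have Hm : (m.+1)%:R = \sum_(0 <= i < v) x i * Rf x v i.
  by rewrite hS1 sum_ell // hsum natrD addrK.
rewrite size_gen natr_sum big_mkcond /=.
have -> : (m.+1)`!%:R * Df x v / Pf v lam =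
    \sum_(0 <= i < v) (m`!%:R * x i * Rf x v i * Df x v / Pf v lam).
  rewrite factS natrM Hm !mulr_suml; apply: eq_bigr => i _; ring.
apply: ler_sum_nat => i /andP[_ hi].
case: (boolP (valid lam i)) => hv.
- have [hs' hp' hsum'] := decr_facts hs hp hsum hv hi.
  apply: le_trans (IH _ hs' hp' hsum').
  rewrite (@Dstep _ x (xr v (decr lam i)) v i) //; first last.
  + by rewrite xr_decr // eqxx.
  + by move=> j hj hji; rewrite xr_decr // (negbTE hji).
  rewrite (Pf_decr hv hi) -/x.
  have hx : x i != 0.
    rewrite /x /xr pnatr_eq0 /ell; have := leq_ltn_trans (leq0n _) hv; lia.
  have hP := Pf_pos v (decr lam i).
  rewrite le_eqVlt; apply/orP; left; apply/eqP.
  move: (Rf x v i) (Df x v) (Pf v (decr lam i)) hP => R D P hP'.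
  by field; rewrite hx hP'.
- have z : x i * Rf x v i = 0.
    have hle : nth 0%N lam i.+1 = nth 0%N lam i.
      by apply/eqP; rewrite eqn_leq hp leqNgt hv.
    case: (ltnP i.+1 v) => hiv.
      rewrite /Rf (bigD1_seq i.+1) /= ?mem_iota ?iota_uniq //; last by lia.
      rewrite (gtn_eqF (ltnSn i)).
      have -> : x i - x i.+1 - 1 = 0.
        rewrite /x /xr /ell hle -natrB; last by lia.
        have -> : (nth 0%N lam i + (v - 1 - i) - (nth 0%N lam i + (v - 1 - i.+1)) = 1)%N by lia.
        by rewrite subrr.
      by rewrite !mul0r mulr0.
    have h0 : nth 0%N lam i.+1 = 0%N by rewrite nth_default // hs.
    have -> : x i = 0.
      rewrite /x /xr /ell -hle h0.
      by have -> : (0 + (v - 1 - i))%N = 0%N by lia.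
    by rewrite mul0r.
  by rewrite -(mulrA _ (x i)) z mulr0 !mul0r.
Qed.

Local Close Scope ring_scope.

Lemma good_cols lam r : part lam -> good lam r -> forall i i' j, (i < i')%N ->
  (j < nth 0 lam i')%N -> (fill r i j < fill r i' j)%N.
Proof.
move=> hp hg i i' j hii'; rewrite -(subnKC hii'); elim: (i' - i.+1) => [|d IH] hj.
  rewrite addn0 in hj *.
  have hj0 : (j < nth 0 lam i)%N by apply: leq_trans hj (part_mono hp (leqnSn i)).
  by have [_ _ g3 _] := hg i j hj0; apply: g3.
have hj1 : (j < nth 0 lam (i.+1 + d))%N.
  by apply: leq_trans hj (part_mono hp _); rewrite addnS.
apply: ltn_trans (IH hj1) _.
have [_ _ g3 _] := hg _ j hj1; rewrite addnS; apply: g3; rewrite -addnS //.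
Qed.

Lemma syt_count u v : (0 < u)%N -> (0 < v)%N ->
  (size (gen v (u * v) (nseq v u)) <= num_SYT_rect u v)%N.
Proof.
move=> hu hv.
set lam := nseq v u.
have hs : size lam = v by rewrite size_nseq.
have hnth : forall i, nth 0 lam i = if (i < v)%N then u else 0.
  by move=> i; rewrite nth_nseq.
have hp : part lam by move=> i; rewrite !hnth; case: ltnP => h1; case: ltnP => h2 //; lia.
have hsum : sumn lam = (u * v)%N by rewrite sumn_nseq.
have npos : (0 < u * v)%N by rewrite muln_gt0 hu.
pose toF (r : seq nat) : rect_filling u v :=
  [ffun p : 'I_v * 'I_u => Ordinal (ltn_pmod (fill r p.1 p.2) npos)].
have hdom : forall (i : 'I_v) (j : 'I_u), (j < nth 0 lam i)%N.
  by move=> i j; rewrite hnth ltn_ord.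
have toFE : forall r, r \in gen v (u * v) lam -> forall p, val (toF r p) = fill r p.1 p.2.
  move=> r hr [i j]; rewrite ffunE /=.
  have [_ hsz hg] := gen_inv hs hp hsum hr.
  have [g1 _ _ _] := hg i j (hdom i j).
  by rewrite modn_small // -hsz.
have key : forall r, r \in gen v (u * v) lam -> is_SYT_rect (toF r).
  move=> r hr; have [_ hsz hg] := gen_inv hs hp hsum hr.
  apply/and3P; split.
  - apply/injectiveP => [[i j] [i' j']] /(congr1 val); rewrite !toFE //= => e.
    have [_ _ _ g4] := hg i j (hdom i j).
    have [ei ej] := g4 i' j' (hdom i' j') e.
    by congr (_, _); apply: val_inj.
  - apply/forallP => i; apply/forallP => j; apply/forallP => j'; apply/implyP => hjj'.
    rewrite !toFE //=.
    have [_ g2 _ _] := hg i j (hdom i j).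
    exact: g2.
  - apply/forallP => j; apply/forallP => i; apply/forallP => i'; apply/implyP => hii'.
    by rewrite !toFE //=; apply: good_cols.
have inj : {in gen v (u * v) lam &, injective toF}.
  move=> r1 r2 h1 h2 e; apply: (gen_inj hs hp hsum h1 h2) => i j.
  rewrite hnth; case: (ltnP i v) => hi hj //.
  have := congr1 (fun f : rect_filling u v => nat_of_ord (f (Ordinal hi, Ordinal hj))) e.
  by rewrite /= !toFE.
have hu' : uniq (map toF (gen v (u * v) lam)) by rewrite map_inj_in_uniq // gen_uniq.
rewrite -(size_map toF) -(card_uniqP hu') /num_SYT_rect.
apply: subset_leq_card; apply/subsetP => f /mapP [r hr ->].
by rewrite inE; apply: key.
Qed.

Lemma nat_bound u v : (0 < u)%N -> (0 < v)%N -> ((u * v)`! <= num_SYT_rect u v * Hk u v)%N.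
Proof.
move=> hu hv.
set lam := nseq v u.
have hs : size lam = v by rewrite size_nseq.
have hp : part lam by move=> i; rewrite !nth_nseq; case: ltnP => h1; case: ltnP => h2 //; lia.
have hsum : sumn lam = (u * v)%N by rewrite sumn_nseq.
have hr : (Df (xr v lam) v * (Hk u v)%:R = Pf v lam)%R.
  by apply: rect_val => i hi; rewrite nth_nseq hi.
have hm := main_bound hs hp hsum.
have hc := syt_count hu hv.
have hP := Pf_pos v lam.
have hH : ((Hk u v)%:R != 0 :> rat)%R.
  by apply: contraNneq hP => h; rewrite -hr h mulr0.
have hD : (Df (xr v lam) v != 0)%R.
  by apply: contraNneq hP => h; rewrite -hr h mul0r.
have e : (((u * v)`!)%:R * Df (xr v lam) v / Pf v lam = ((u * v)`!)%:R / (Hk u v)%:R :> rat)%R.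
  by rewrite -hr; field; rewrite hD hH.
rewrite e in hm.
have hH0 : (0 < (Hk u v)%:R :> rat)%R by rewrite lt0r hH /= ler0n.
rewrite ler_pdivrMr // in hm.
rewrite -(ler_nat rat) natrM.
apply: le_trans hm _.
by rewrite ler_wpM2r ?ler0n // ler_nat.
Qed.

Lemma Hk_sq u v : (expn 4 (u * v) * (Hk u v * Hk u v) <= expn (u + v) (2 * (u * v)))%N.
Proof.
have e1 : Hk u v = (\prod_(0 <= i < v) \prod_(0 <= k < u) ((v - 1 - i) + 1 + (u - 1 - k)))%N.
  rewrite /Hk big_nat_rev /=; apply: eq_big_nat => i /andP[_ hi].
  rewrite big_nat_rev /=; apply: eq_big_nat => k /andP[_ hk].
  congr (_ + _ + _)%N; lia.
have e4 : expn 4 (u * v) = (\prod_(0 <= i < v) \prod_(0 <= k < u) 4)%N.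
  rewrite (eq_big_nat _ _ (fun i _ => prod_nat_const_nat 0 u 4)) prod_nat_const_nat.
  by rewrite !subn0 -expnM.
have eS : expn (u + v) (2 * (u * v)) = (\prod_(0 <= i < v) \prod_(0 <= k < u) (expn (u + v) 2))%N.
  rewrite (eq_big_nat _ _ (fun i _ => prod_nat_const_nat 0 u _)) prod_nat_const_nat.
  by rewrite !subn0 -!expnM; congr (expn _ _); lia.
rewrite {2}e1 /Hk e4 eS -!big_split /=.
rewrite big_nat_cond [X in (_ <= X)%N]big_nat_cond.
apply: leq_prod => i /andP[/andP[_ hi] _]; rewrite -!big_split /=.
rewrite big_nat_cond [X in (_ <= X)%N]big_nat_cond.
apply: leq_prod => k /andP[/andP[_ hk] _].
set a := (i + 1 + k)%N.
set b := (v - 1 - i + 1 + (u - 1 - k))%N.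
have hab : (a + b = u + v)%N by rewrite /a /b; lia.
rewrite -hab.
have : (4 * (a * b) <= expn (a + b) 2)%N.
  clearbody a b; rewrite sqrnD !expnS !expn0 !muln1.
  have key : forall x y, (x <= y)%N -> (4 * (x * y) <= x * x + y * y + 2 * (x * y))%N.
    move=> x y /subnKC <-; move: (y - x)%N => d.
    have : (0 <= d * d)%N by [].
    nia.
  case: (leqP a b) => hab'; first exact: key.
  have := key b a (ltnW hab'); lia.
by rewrite mulnA.
Qed.

Delimit Scope R_scope with R.

Theorem lemma3p12 (u v : nat) (hu : (0 < u)%N) (hv : (0 < v)%N) :
  let n := (u * v)%N in
  (((INR n / INR (u + v)) * (2 / exp 1)) ^ n < INR (num_SYT_rect u v))%R /\
  (forall alpha : R, (0 <= alpha)%R ->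
     (alpha <= (INR n / INR (u + v)) * (2 / exp 1))%R ->
     (alpha ^ n <= INR (num_SYT_rect u v))%R).
Proof.
apply: (@final_real u v (num_SYT_rect u v) (Hk u v) hu hv).
  exact: nat_bound.
exact: Hk_sq.
Qed.
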